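(* Let $T \in \mathbb{R}^n \otimes \mathbb{R}^n \otimes \mathbb{R}^n$ be a real tensor with complex subrank $Q_{\mathbb{C}}(T) = n$. Then $Q(T) \geq n/2$.
   Context: For $r \geq 0$ let $I_r := \sum_{j=1}^r e_j \otimes e_j \otimes e_j$. The (real) subrank of $T \in \mathbb{R}^{n_1} \otimes \mathbb{R}^{n_2} \otimes \mathbb{R}^{n_3}$ is $Q(T) := \max\{ r \mid \exists\ \mathbb{R}\text{-linear } \varphi_i : \mathbb{R}^{n_i} \to \mathbb{R}^r,\ (\varphi_1 \otimes \varphi_2 \otimes \varphi_3) T = I_r\}$. The complex subrank $Q_{\mathbb{C}}(T)$ is defined the same way but allowing $\mathbb{C}$-linear maps $\varphi_i : \mathbb{C}^{n_i} \to \mathbb{C}^r$. *)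

(* Defs.v *)
From HB Require Import structures.
From mathcomp Require Import all_boot all_order all_algebra.
From mathcomp Require Import reals.
From mathcomp Require Import complex.
Set Implicit Arguments. Unset Strict Implicit. Unset Printing Implicit Defensive.
Import Order.TTheory GRing.Theory Num.Theory.
Local Open Scope ring_scope.

Definition tensor3 (K : Type) (n1 n2 n3 : nat) := 'I_n1 -> 'I_n2 -> 'I_n3 -> K.

Definition unit_tensor (K : nzRingType) (r : nat) : tensor3 K r r r :=
  fun a b c => if (a == b) && (b == c) then 1 else 0.

(* (phi1 ⊗ phi2 ⊗ phi3) T, where phi_k : K^{n_k} -> K^r is the K-linear map
   given by the matrix A_k : 'M_(r, n_k). *)
Definition tensor_apply (K : nzRingType) (n1 n2 n3 r : nat)
  (A1 : 'M[K]_(r, n1)) (A2 : 'M[K]_(r, n2)) (A3 : 'M[K]_(r, n3))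
  (T : tensor3 K n1 n2 n3) : tensor3 K r r r :=
  fun a b c => \sum_(i < n1) \sum_(j < n2) \sum_(k < n3)
                 A1 a i * A2 b j * A3 c k * T i j k.

Definition restricts_to_unit (K : nzRingType) (n1 n2 n3 : nat)
  (T : tensor3 K n1 n2 n3) (r : nat) : Prop :=
  exists (A1 : 'M[K]_(r, n1)) (A2 : 'M[K]_(r, n2)) (A3 : 'M[K]_(r, n3)),
    tensor_apply A1 A2 A3 T = @unit_tensor K r.

(* "Q(T) = m" for the subrank over K:  m is the maximum r with T restricting to I_r. *)
Definition subrank_eq (K : nzRingType) (n1 n2 n3 : nat)
  (T : tensor3 K n1 n2 n3) (m : nat) : Prop :=
  restricts_to_unit T m /\ (forall r, restricts_to_unit T r -> (r <= m)%N).

(* "Q(T) >= x": some r >= x with T restricting to I_r (equivalent since Q is a max). *)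

Definition complexify (R : rcfType) (n1 n2 n3 : nat) (T : tensor3 R n1 n2 n3)
  : tensor3 R[i] n1 n2 n3 := fun i j k => (T i j k)%:C%C.

(* Main.v *)
Require Import Defs.
From HB Require Import structures.
From mathcomp Require Import all_boot all_order all_algebra.
From mathcomp Require Import reals.
From mathcomp Require Import complex.
From Stdlib Require Import FunctionalExtensionality.
From mathcomp Require Import ring lra.
Set Implicit Arguments. Unset Strict Implicit. Unset Printing Implicit Defensive.
Import Order.TTheory GRing.Theory Num.Theory.
Local Open Scope ring_scope.
Definition m1 (K : comNzRingType) n1 n2 n3 r (X : 'M[K]_(r, n1)) (T : tensor3 K n1 n2 n3)
  : tensor3 K r n2 n3 := fun a j k => \sum_(i < n1) X a i * T i j k.
Definition m2 (K : comNzRingType) n1 n2 n3 r (X : 'M[K]_(r, n2)) (T : tensor3 K n1 n2 n3)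
  : tensor3 K n1 r n3 := fun i b k => \sum_(j < n2) X b j * T i j k.
Definition m3 (K : comNzRingType) n1 n2 n3 r (X : 'M[K]_(r, n3)) (T : tensor3 K n1 n2 n3)
  : tensor3 K n1 n2 r := fun i j c => \sum_(k < n3) X c k * T i j k.

Ltac fext := apply: functional_extensionality_dep => ?.
Ltac fext3 a b c := apply: functional_extensionality_dep => a;
  apply: functional_extensionality_dep => b; apply: functional_extensionality_dep => c.

Lemma tapply_m (K : comNzRingType) n1 n2 n3 r (X : 'M[K]_(r, n1))
  (Y : 'M[K]_(r, n2)) (Z : 'M[K]_(r, n3)) (T : tensor3 K n1 n2 n3) :
  tensor_apply X Y Z T = m1 X (m2 Y (m3 Z T)).
Proof.
fext3 a b c.
rewrite /tensor_apply /m1 /m2 /m3; apply: eq_bigr => i _.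
rewrite mulr_sumr; apply: eq_bigr => j _.
rewrite mulr_sumr mulr_sumr; apply: eq_bigr => k _.
by rewrite !mulrA.
Qed.

Lemma m12C (K : comNzRingType) n1 n2 n3 r s (X : 'M[K]_(r, n1))
  (Y : 'M[K]_(s, n2)) (T : tensor3 K n1 n2 n3) :
  m1 X (m2 Y T) = m2 Y (m1 X T).
Proof.
fext3 a b c; rewrite /m1 /m2.
under eq_bigr => i _ do rewrite mulr_sumr.
rewrite exchange_big; apply: eq_bigr => j _; rewrite mulr_sumr.
by apply: eq_bigr => i _; rewrite !mulrA [X a i * _]mulrC.
Qed.

Lemma m13C (K : comNzRingType) n1 n2 n3 r s (X : 'M[K]_(r, n1))
  (Y : 'M[K]_(s, n3)) (T : tensor3 K n1 n2 n3) :
  m1 X (m3 Y T) = m3 Y (m1 X T).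
Proof.
fext3 a b c; rewrite /m1 /m3.
under eq_bigr => i _ do rewrite mulr_sumr.
rewrite exchange_big; apply: eq_bigr => j _; rewrite mulr_sumr.
by apply: eq_bigr => i _; rewrite !mulrA [X a i * _]mulrC.
Qed.

Lemma m23C (K : comNzRingType) n1 n2 n3 r s (X : 'M[K]_(r, n2))
  (Y : 'M[K]_(s, n3)) (T : tensor3 K n1 n2 n3) :
  m2 X (m3 Y T) = m3 Y (m2 X T).
Proof.
fext3 a b c; rewrite /m2 /m3.
under eq_bigr => i _ do rewrite mulr_sumr.
rewrite exchange_big; apply: eq_bigr => j _; rewrite mulr_sumr.
by apply: eq_bigr => i _; rewrite !mulrA [X b i * _]mulrC.
Qed.

Lemma m1M (K : comNzRingType) n1 n2 n3 r s (C : 'M[K]_(s, r)) (A : 'M[K]_(r, n1))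
  (T : tensor3 K n1 n2 n3) : m1 (C *m A) T = m1 C (m1 A T).
Proof.
fext3 a b c; rewrite /m1.
under eq_bigr => i _ do rewrite mxE mulr_suml.
rewrite exchange_big; apply: eq_bigr => x _; rewrite mulr_sumr.
by apply: eq_bigr => i _; rewrite mulrA.
Qed.

Lemma m2M (K : comNzRingType) n1 n2 n3 r s (C : 'M[K]_(s, r)) (A : 'M[K]_(r, n2))
  (T : tensor3 K n1 n2 n3) : m2 (C *m A) T = m2 C (m2 A T).
Proof.
fext3 a b c; rewrite /m2.
under eq_bigr => i _ do rewrite mxE mulr_suml.
rewrite exchange_big; apply: eq_bigr => x _; rewrite mulr_sumr.
by apply: eq_bigr => i _; rewrite mulrA.
Qed.

Lemma m3M (K : comNzRingType) n1 n2 n3 r s (C : 'M[K]_(s, r)) (A : 'M[K]_(r, n3))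
  (T : tensor3 K n1 n2 n3) : m3 (C *m A) T = m3 C (m3 A T).
Proof.
fext3 a b c; rewrite /m3.
under eq_bigr => i _ do rewrite mxE mulr_suml.
rewrite exchange_big; apply: eq_bigr => x _; rewrite mulr_sumr.
by apply: eq_bigr => i _; rewrite mulrA.
Qed.

Lemma tapply_comp (K : comNzRingType) n1 n2 n3 r s
  (C1 C2 C3 : 'M[K]_(s, r)) (A1 : 'M[K]_(r, n1)) (A2 : 'M[K]_(r, n2))
  (A3 : 'M[K]_(r, n3)) (T : tensor3 K n1 n2 n3) :
  tensor_apply (C1 *m A1) (C2 *m A2) (C3 *m A3) T
  = tensor_apply C1 C2 C3 (tensor_apply A1 A2 A3 T).
Proof.
rewrite !tapply_m m1M m2M m3M; congr (m1 C1 _).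
rewrite m12C; congr (m2 C2 _).
rewrite m23C m13C m12C; congr (m3 C3 _).

Qed.

Lemma sum_delta (K : nzRingType) n (F : 'I_n -> K) i :
  \sum_(j < n) (if i == j then F j else 0) = F i.
Proof.
rewrite (bigD1 i) //= eqxx big1 ?addr0 // => j ji.
by rewrite eq_sym (negbTE ji).
Qed.

Lemma tapply_unit (K : comNzRingType) n r (X Y Z : 'M[K]_(r, n)) a b c :
  tensor_apply X Y Z (@unit_tensor K n) a b c = \sum_(j < n) X a j * Y b j * Z c j.
Proof.
rewrite /tensor_apply /unit_tensor; apply: eq_bigr => i _.
transitivity (\sum_(j < n) if i == j then X a i * Y b j * Z c j else 0).
  apply: eq_bigr => j _; case: eqP => [<-|/eqP ne].
    rewrite -(sum_delta (fun k => X a i * Y b i * Z c k) i).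
    by apply: eq_bigr => k _; case: eqP; rewrite ?mulr1 ?mulr0.
  by apply: big1 => k _; rewrite /= mulr0.
by rewrite sum_delta.
Qed.

Local Open Scope complex_scope.

Lemma cplx_tapply (R : rcfType) n r (B1 B2 B3 : 'M[R]_(r, n)) (T : tensor3 R n n n) :
  complexify (tensor_apply B1 B2 B3 T) =
  tensor_apply (map_mx (real_complex R) B1) (map_mx (real_complex R) B2)
    (map_mx (real_complex R) B3) (complexify T).
Proof.
fext3 a b c; rewrite /complexify /tensor_apply rmorph_sum; apply: eq_bigr => i _.
rewrite rmorph_sum; apply: eq_bigr => j _.
rewrite rmorph_sum; apply: eq_bigr => k _.
by rewrite !rmorphM !mxE.
Qed.

Lemma conj_tapply (R : rcfType) n r (A1 A2 A3 : 'M[R[i]]_(r, n)) (T : tensor3 R n n n) :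
  tensor_apply (map_mx (@conjc R) A1) (map_mx (@conjc R) A2) (map_mx (@conjc R) A3)
    (complexify T) =
  fun a b c => conjc (tensor_apply A1 A2 A3 (complexify T) a b c).
Proof.
fext3 a b c; rewrite /complexify /tensor_apply rmorph_sum; apply: eq_bigr => i _.
rewrite rmorph_sum; apply: eq_bigr => j _.
rewrite rmorph_sum; apply: eq_bigr => k _.
rewrite !rmorphM !mxE; congr (_ * _); symmetry; exact: conjc_real.
Qed.

Lemma m1_unit (K : comUnitRingType) n (X : 'M[K]_n) (W : tensor3 K n n n) :
  m1 X W = @unit_tensor K n -> X \in unitmx.
Proof.
move=> H.
suff : X *m (\matrix_(i, a') W i a' a') = 1%:M by case/mulmx1_unit.

apply/matrixP => a a'; rewrite mxE [RHS]mxE; under eq_bigr do rewrite mxE.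
have := congr1 (fun f => f a a' a') H; rewrite /m1 /unit_tensor /= => ->.
by rewrite eqxx andbT; case: eqP.
Qed.

Lemma m2_unit (K : comUnitRingType) n (X : 'M[K]_n) (W : tensor3 K n n n) :
  m2 X W = @unit_tensor K n -> X \in unitmx.
Proof.
move=> H.
suff : X *m (\matrix_(i, b') W b' i b') = 1%:M by case/mulmx1_unit.

apply/matrixP => b b'; rewrite mxE [RHS]mxE; under eq_bigr do rewrite mxE.
have := congr1 (fun f => f b' b b') H; rewrite /m2 /unit_tensor /= => ->.
by rewrite [b == _]eq_sym andbb; case: eqP.
Qed.

Lemma m3_unit (K : comUnitRingType) n (X : 'M[K]_n) (W : tensor3 K n n n) :
  m3 X W = @unit_tensor K n -> X \in unitmx.
Proof.
move=> H.
suff : X *m (\matrix_(i, c') W c' c' i) = 1%:M by case/mulmx1_unit.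

apply/matrixP => c c'; rewrite mxE [RHS]mxE; under eq_bigr do rewrite mxE.
have := congr1 (fun f => f c' c' c) H; rewrite /m3 /unit_tensor /= => ->.
by rewrite eqxx /= eq_sym; case: eqP.
Qed.

Lemma tapply_units (K : comUnitRingType) n (A1 A2 A3 : 'M[K]_n) T :
  tensor_apply A1 A2 A3 T = @unit_tensor K n ->
  [/\ A1 \in unitmx, A2 \in unitmx & A3 \in unitmx].
Proof.
rewrite tapply_m => H; split.
- exact: m1_unit H.
- by rewrite m12C in H; exact: m2_unit H.
- by rewrite m23C m13C in H; exact: m3_unit H.
Qed.

Lemma sum_id_l (K : nzRingType) n (F : 'I_n -> K) a :
  \sum_(j < n) (1%:M : 'M[K]_n) a j * F j = F a.
Proof.
rewrite -(sum_delta F a); apply: eq_bigr => j _; rewrite mxE.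
by case: eqP => _; rewrite ?mul1r ?mul0r.
Qed.

Definition cj (R : rcfType) p q (A : 'M[R[i]]_(p, q)) : 'M[R[i]]_(p, q) :=
  map_mx (@conjc R) A.

Section NStruct.
Variables (R : rcfType) (n : nat) (N1 N2 N3 : 'M[R[i]]_n).
Hypothesis NI : tensor_apply N1 N2 N3 (@unit_tensor _ n) = @unit_tensor _ n.
Hypothesis NN1 : cj N1 *m N1 = 1%:M.
Hypothesis NN2 : cj N2 *m N2 = 1%:M.
Hypothesis NN3 : cj N3 *m N3 = 1%:M.

Lemma E1 a m m' : N1 a m * (m' == m)%:R = conjc (N2 m a) * conjc (N3 m' a).
Proof.
have := tapply_comp 1%:M (cj N2) (cj N3) N1 N2 N3 (@unit_tensor _ n).
rewrite NI NN2 NN3 mul1mx => /(congr1 (fun f => f a m m')).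
rewrite !tapply_unit => H.
transitivity (\sum_(j < n) (1%:M : 'M_n) m j * (N1 a j * (1%:M : 'M_n) m' j)).
  by rewrite sum_id_l mxE.
rewrite (eq_bigr (fun j => N1 a j * 1%:M m j * 1%:M m' j)); last first.
  by move=> j _; rewrite mulrA [_ * N1 a j]mulrC.
rewrite H; under eq_bigr do rewrite -mulrA.
by rewrite sum_id_l !mxE.
Qed.

Lemma E2 a m m' : N2 a m * (m' == m)%:R = conjc (N1 m a) * conjc (N3 m' a).
Proof.
have := tapply_comp (cj N1) 1%:M (cj N3) N1 N2 N3 (@unit_tensor _ n).
rewrite NI NN1 NN3 mul1mx => /(congr1 (fun f => f m a m')).
rewrite !tapply_unit => H.
transitivity (\sum_(j < n) (1%:M : 'M_n) m j * (N2 a j * (1%:M : 'M_n) m' j)).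
  by rewrite sum_id_l mxE.
rewrite (eq_bigr (fun j => 1%:M m j * N2 a j * 1%:M m' j)); last first.
  by move=> j _; rewrite mulrA.
rewrite H (eq_bigr (fun j => 1%:M a j * (cj N1 m j * cj N3 m' j))); last first.
  by move=> j _; ring.
by rewrite sum_id_l !mxE.
Qed.

Lemma E3 a m m' : N3 a m * (m' == m)%:R = conjc (N1 m a) * conjc (N2 m' a).
Proof.
have := tapply_comp (cj N1) (cj N2) 1%:M N1 N2 N3 (@unit_tensor _ n).
rewrite NI NN1 NN2 mul1mx => /(congr1 (fun f => f m m' a)).
rewrite !tapply_unit => H.
transitivity (\sum_(j < n) (1%:M : 'M_n) m j * (N3 a j * (1%:M : 'M_n) m' j)).
  by rewrite sum_id_l mxE.
rewrite (eq_bigr (fun j => 1%:M m j * 1%:M m' j * N3 a j)); last first.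
  by move=> j _; ring.
rewrite H (eq_bigr (fun j => 1%:M a j * (cj N1 m j * cj N2 m' j))); last first.
  by move=> j _; ring.
by rewrite sum_id_l !mxE.
Qed.

Definition Zs a m := N1 a m != 0.

Lemma nz1 a m : (N1 a m != 0) = (N2 m a != 0) && (N3 m a != 0).
Proof. by have := E1 a m m; rewrite eqxx mulr1 => ->; rewrite mulf_eq0 negb_or !conjc_eq0. Qed.
Lemma nz2 a m : (N2 a m != 0) = (N1 m a != 0) && (N3 m a != 0).
Proof. by have := E2 a m m; rewrite eqxx mulr1 => ->; rewrite mulf_eq0 negb_or !conjc_eq0. Qed.
Lemma nz3 a m : (N3 a m != 0) = (N1 m a != 0) && (N2 m a != 0).
Proof. by have := E3 a m m; rewrite eqxx mulr1 => ->; rewrite mulf_eq0 negb_or !conjc_eq0. Qed.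

Lemma Zsym a m : Zs a m -> Zs m a.
Proof.
rewrite /Zs nz1 => /andP[/[dup] h2 _ _].
by move: h2; rewrite nz2 => /andP[_]; rewrite nz3 => /andP[].
Qed.

Lemma Z2 a m : (N2 a m != 0) = Zs a m.
Proof.
rewrite nz2; apply/idP/idP => [/andP[h _]|h]; first exact: Zsym.
have hs := Zsym h; move: hs; rewrite /Zs => -> /=.
by move: h; rewrite /Zs nz1 => /andP[].
Qed.

Lemma Z3 a m : (N3 a m != 0) = Zs a m.
Proof.
rewrite nz3; apply/idP/idP => [/andP[h _]|h]; first exact: Zsym.
have hs := Zsym h; move: hs; rewrite /Zs => -> /=.
by move: h; rewrite /Zs nz1 => /andP[].
Qed.

Lemma Zcol a a' m : Zs a m -> Zs a' m -> a = a'.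
Proof.
move=> h h'; case: (eqVneq a a') => // ne.
have := E1 m a a'; rewrite eq_sym (negbTE ne) mulr0 => /esym/eqP.
rewrite mulf_eq0 !conjc_eq0 => /orP[] /eqP e.
  by move: h; rewrite -Z2 e eqxx.
by move: h'; rewrite -Z3 e eqxx.
Qed.

Lemma Zrow a m m' : Zs a m -> Zs a m' -> m = m'.
Proof. by move=> /Zsym h /Zsym h'; exact: Zcol h h'. Qed.


Lemma sumN s : \sum_(m < n) N1 s m * N2 s m * N3 s m = 1.
Proof.
have := congr1 (fun f => f s s s) NI; rewrite /= tapply_unit => ->.
by rewrite /unit_tensor !eqxx.
Qed.

Definition Sp : {set 'I_n} := [set a | [forall m, Zs a m ==> (a <= m)%N]].

Definition fpk (a : 'I_n) : 'I_n := odflt a [pick m | Zs a m && (m < a)%N].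

Lemma fpkP a : a \notin Sp -> Zs a (fpk a) && (fpk a < a)%N.
Proof.
rewrite /fpk; case: pickP => [m //|none].
rewrite inE negb_forall => /existsP[m]; rewrite negb_imply -ltnNge.
by rewrite none.
Qed.

Lemma card_Sp : (n <= 2 * #|Sp|)%N.
Proof.
have inj : {in ~: Sp &, injective fpk}.
  move=> a a'; rewrite !in_setC => ha ha' e.
  have /andP[h1 _] := fpkP ha; have /andP[h2 _] := fpkP ha'.
  by rewrite e in h1; exact: Zcol h1 h2.
have sub : fpk @: (~: Sp) \subset Sp.
  apply/subsetP => m /imsetP[a]; rewrite in_setC => ha ->.
  have /andP[h1 h2] := fpkP ha.
  rewrite inE; apply/forallP => m'; apply/implyP => hm'.
  have hs := Zsym h1.
  by rewrite -(Zrow hs hm') ltnW.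
have := subset_leq_card sub; rewrite card_in_imset //.
move=> h; have := cardsC Sp; rewrite card_ord => e.
apply: leq_trans (eq_leq (esym e)) _.
by rewrite mul2n -addnn leq_add2l.
Qed.

Definition lam (N : 'M[R[i]]_n) s : R[i] := if N s s == -1 then 'i else 1.
Definition cc (N : 'M[R[i]]_n) s m : R[i] :=
  lam N s * (s == m)%:R + conjc (lam N s) * N s m.

Lemma ccnz (N : 'M[R[i]]_n) (hN : forall a m, (N a m != 0) = Zs a m) s m :
  cc N s m != 0 -> (s == m) || Zs s m.
Proof.
apply: contraR; rewrite negb_or => /andP[/negbTE h1 h2].
by rewrite /cc h1 mulr0 add0r; move: h2; rewrite -hN negbK => /eqP ->; rewrite mulr0.
Qed.

Lemma Puniq s t m : s \in Sp -> t \in Sp -> (s == m) || Zs s m -> (t == m) || Zs t m -> s = t.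
Proof.
rewrite !inE => /forallP hs /forallP ht.
have key : forall x y, Zs x y -> [forall m, Zs x m ==> (x <= m)%N] ->
    [forall m, Zs y m ==> (y <= m)%N] -> x = y.
  move=> x y hxy /forallP hx /forallP hy; apply/val_inj/eqP; rewrite eqn_leq.
  by rewrite (implyP (hx y) hxy) (implyP (hy x) (Zsym hxy)).
have hs' : [forall m, Zs s m ==> (s <= m)%N] by apply/forallP.
have ht' : [forall m, Zs t m ==> (t <= m)%N] by apply/forallP.
case/orP => [/eqP e1|h1]; case/orP => [/eqP e2|h2].
- by rewrite e1 e2.
- by rewrite -e1 in h2; apply/esym; apply: key h2 ht' hs'.
- by rewrite -e2 in h1; apply: key h1 hs' ht'.
- exact: Zcol h1 h2.
Qed.

Lemma Off s t u : s \in Sp -> t \in Sp -> u \in Sp -> ~~ ((s == t) && (t == u)) ->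
  \sum_(m < n) cc N1 s m * cc N2 t m * cc N3 u m = 0.
Proof.
move=> hs ht hu hne; apply: big1 => m _; apply/eqP; apply: contraR hne.
rewrite !mulf_eq0 !negb_or => /andP[/andP[c1 c2] c3].
have h1 := ccnz (fun a m => erefl (N1 a m != 0)) c1.
have h2 := ccnz Z2 c2.
have h3 := ccnz Z3 c3.
by rewrite (Puniq hs ht h1 h2) (Puniq ht hu h2 h3) !eqxx.
Qed.

Lemma fac (mu : R[i]) : (if mu == -1 then 'i else 1) +
   conjc (if mu == -1 then 'i else 1) * mu != 0.
Proof.
case: (eqVneq mu (-1)) => [->|ne].
  apply/eqP => /(congr1 (@complex.Im R)) /=.
  move=> h; lra.
rewrite rmorph1 mul1r addr_eq0; apply/eqP => e.
by move: ne; rewrite -[mu]opprK -e eqxx.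
Qed.

Lemma Diag s : s \in Sp -> \sum_(m < n) cc N1 s m * cc N2 s m * cc N3 s m != 0.
Proof.
move=> hs; case: (boolP (Zs s s)) => hss.
  rewrite (bigD1 s) //= big1 ?addr0.
    rewrite /cc eqxx !mulr1 /lam.
    by apply: mulf_neq0; [apply: mulf_neq0|]; exact: fac.
  move=> m hm; rewrite /cc eq_sym (negbTE hm) mulr0 add0r.
  have -> : N1 s m = 0.
    by apply/eqP; apply: contraNT hm => h; apply/eqP/esym; exact: Zrow hss h.
  by rewrite mulr0 !mul0r.
have e1 : N1 s s = 0 by apply/eqP; rewrite -[_ == 0]negbK.
have e2 : N2 s s = 0 by apply/eqP; rewrite -[_ == 0]negbK Z2.
have e3 : N3 s s = 0 by apply/eqP; rewrite -[_ == 0]negbK Z3.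
have l1 : forall N : 'M[R[i]]_n, N s s = 0 -> lam N s = 1.
  by move=> N e; rewrite /lam e eq_sym oppr_eq0 oner_eq0.
rewrite (eq_bigr (fun m => (s == m)%:R + N1 s m * N2 s m * N3 s m)); last first.
  move=> m _; rewrite /cc !l1 // rmorph1 !mul1r.
  case: eqP => [<-|_]; first by rewrite e1 e2 e3 !addr0 !mulr0 addr0 !mulr1.
  by rewrite !add0r.
rewrite big_split /= sumN.
have -> : \sum_(m < n) (s == m)%:R = 1 :> R[i].
  rewrite (bigD1 s) //= eqxx big1 ?addr0 // => m hm.
  by rewrite eq_sym (negbTE hm).
by rewrite -mulr2n pnatr_eq0.
Qed.
End NStruct.

Lemma cjK (R : rcfType) p q (A : 'M[R[i]]_(p, q)) : cj (cj A) = A.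
Proof. by apply/matrixP => i j; rewrite !mxE conjcK. Qed.

Lemma cjM (R : rcfType) p q s (A : 'M[R[i]]_(p, q)) (B : 'M[R[i]]_(q, s)) :
  cj (A *m B) = cj A *m cj B.
Proof. by rewrite /cj map_mxM. Qed.

Lemma cjV (R : rcfType) p (A : 'M[R[i]]_p) : cj (invmx A) = invmx (cj A).
Proof. by rewrite /cj map_invmx. Qed.

Lemma cj_unit (R : rcfType) p (A : 'M[R[i]]_p) : (cj A \in unitmx) = (A \in unitmx).
Proof. by rewrite /cj map_unitmx. Qed.

Lemma NN_of (R : rcfType) p (A : 'M[R[i]]_p) : A \in unitmx ->
  cj (cj A *m invmx A) *m (cj A *m invmx A) = 1%:M.
Proof.
move=> u; rewrite cjM cjK cjV -mulmxA (mulmxA (invmx (cj A))) mulVmx ?cj_unit //.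
by rewrite mul1mx mulmxV.
Qed.

Lemma tapply_scale (K : comNzRingType) n r (d : 'I_r -> K) (B1 B2 B3 : 'M[K]_(r, n))
  (T : tensor3 K n n n) a b c :
  tensor_apply (\matrix_(x, j) (d x * B1 x j)) B2 B3 T a b c
  = d a * tensor_apply B1 B2 B3 T a b c.
Proof.
rewrite /tensor_apply mulr_sumr; apply: eq_bigr => i _.
rewrite mulr_sumr; apply: eq_bigr => j _.
rewrite mulr_sumr; apply: eq_bigr => k _.
by rewrite mxE !mulrA.
Qed.

Lemma final_step (R : realType) n r (B1 B2 B3 : 'M[R]_(r, n)) (T : tensor3 R n n n) :
  (forall x y z, ~~ ((x == y) && (y == z)) -> tensor_apply B1 B2 B3 T x y z = 0) ->
  (forall x, tensor_apply B1 B2 B3 T x x x != 0) ->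
  restricts_to_unit T r.
Proof.
move=> hoff hdiag.
exists (\matrix_(x, j) ((tensor_apply B1 B2 B3 T x x x)^-1 * B1 x j)), B2, B3.
fext3 a b c; rewrite tapply_scale /unit_tensor.
case: (boolP ((a == b) && (b == c))) => h.
  by case/andP: h => /eqP <- /eqP <-; rewrite mulVf.
by rewrite (hoff a b c h) mulr0.
Qed.

Lemma BC (R : rcfType) n r (N A : 'M[R[i]]_n) (io : 'I_r -> 'I_n) : N *m A = cj A ->
  map_mx (real_complex R) (\matrix_(x, j) (complex.Re (lam N (io x) * A (io x) j) *+ 2))
  = (\matrix_(x, m) cc N (io x) m) *m A.
Proof.
move=> NA; apply/matrixP => x j; rewrite !mxE.
have -> : forall y : R, (y *+ 2)%:C = (y%:C) *+ 2 :> R[i] by move=> y; rewrite rmorphMn.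
rewrite ReJ_add.
under eq_bigr do rewrite mxE /cc mulrDl.
rewrite big_split /=.
have := congr1 (fun M : 'M[R[i]]_n => M (io x) j) NA; rewrite !mxE => e.
have h1 : \sum_(m < n) lam N (io x) * (io x == m)%:R * A m j = lam N (io x) * A (io x) j.
  rewrite (bigD1 (io x)) //= eqxx mulr1 big1 ?addr0 // => m hm.
  by rewrite eq_sym in hm; rewrite (negbTE hm) mulr0 mul0r.
have h2 : \sum_(m < n) conjc (lam N (io x)) * N (io x) m * A m j
    = conjc (lam N (io x)) * conjc (A (io x) j).
  by rewrite -e mulr_sumr; apply: eq_bigr => m _; rewrite mulrA.
rewrite h1 h2 -rmorphM.
by rewrite mulr2n -splitr.
Qed.

Theorem proposition2p3 (R : realType) (n : nat) (T : tensor3 R n n n) :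
  subrank_eq (complexify T) n ->
  exists r : nat, (n <= 2 * r)%N /\ restricts_to_unit T r.
Proof.
case=> [[A1 [A2 [A3 HA]]] _].
have [u1 u2 u3] := tapply_units HA.
pose N1 := cj A1 *m invmx A1.
pose N2 := cj A2 *m invmx A2.
pose N3 := cj A3 *m invmx A3.
have NA1 : N1 *m A1 = cj A1 by rewrite /N1 mulmxKV.
have NA2 : N2 *m A2 = cj A2 by rewrite /N2 mulmxKV.
have NA3 : N3 *m A3 = cj A3 by rewrite /N3 mulmxKV.
have NI : tensor_apply N1 N2 N3 (@unit_tensor _ n) = @unit_tensor _ n.
  rewrite -{1}HA -tapply_comp NA1 NA2 NA3 /cj conj_tapply HA.
  fext3 a b c; rewrite /unit_tensor; case: ifP => _; [exact: rmorph1 | exact: rmorph0].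
have NN1 : cj N1 *m N1 = 1%:M by exact: NN_of.
have NN2 : cj N2 *m N2 = 1%:M by exact: NN_of.
have NN3 : cj N3 *m N3 = 1%:M by exact: NN_of.
exists #|Sp N1|; split; first exact: card_Sp NI NN1 NN2 NN3.
pose io (x : 'I_#|Sp N1|) : 'I_n := enum_val x.
pose B1 : 'M[R]_(#|Sp N1|, n) :=
  \matrix_(x, j) (complex.Re (lam N1 (io x) * A1 (io x) j) *+ 2).
pose B2 : 'M[R]_(#|Sp N1|, n) :=
  \matrix_(x, j) (complex.Re (lam N2 (io x) * A2 (io x) j) *+ 2).
pose B3 : 'M[R]_(#|Sp N1|, n) :=
  \matrix_(x, j) (complex.Re (lam N3 (io x) * A3 (io x) j) *+ 2).
have HV : forall x y z, complexify (tensor_apply B1 B2 B3 T) x y z =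
    \sum_(m < n) cc N1 (io x) m * cc N2 (io y) m * cc N3 (io z) m.
  move=> x y z; rewrite cplx_tapply /B1 /B2 /B3 !BC // tapply_comp HA tapply_unit.
  by apply: eq_bigr => m _; rewrite !mxE.
apply: (@final_step R n _ B1 B2 B3 T).
- move=> x y z h; apply: complexI; rewrite -[LHS]/(complexify _ x y z) HV.
  apply: (Off NI NN1 NN2 NN3) => //; try exact: enum_valP.
  by rewrite /io !(inj_eq enum_val_inj).
- move=> x; have := Diag NI NN1 NN2 NN3 (enum_valP x).
  rewrite -HV /complexify; apply: contra => /eqP ->; by rewrite eqxx.
Qed.
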